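(* Let $n\ge 1$ and consider the order structure on the keys $[n]=\{1,\dots,n\}$, whose ranges are all intervals $\{i_1,i_1+1,\dots,i_2\}$ with $1\le i_1\le i_2\le n$. (i) For every vector $p=(p_1,\dots,p_n)\in[0,1]^n$ with $\sum_{i=1}^n p_i$ an integer, there exists a VarOpt sample distribution for $p$ whose maximum range discrepancy (with respect to intervals) satisfies $\Delta\le 2$. (ii) For every fixed real number $\Delta<2$, there exist $n$ and a vector $p\in[0,1]^n$ with $\sum_i p_i$ an integer such that no VarOpt sample distribution for $p$ has maximum range discrepancy (with respect to intervals) at most $\Delta$.
   Context: Given $p=(p_1,\dots,p_n)\in[0,1]^n$ with $s=\sum_i p_i$ an integer (in the paper the $p_i$ are the IPPS inclusion probabilities $p_i=\min\{1,w_i/\tau\}$ of weighted keys), a sample distribution is a probability distribution over subsets $S\subseteq[n]$. It is called VarOpt for $p$ if: (a) $\Pr[i\in S]=p_i$ for every $i$; (b) $|S|=s$ with probability one; (c) for every $J\subseteq[n]$, $\Pr[J\subseteq S]\le\prod_{i\in J}p_i$ and $\Pr[J\cap S=\emptyset]\le\prod_{i\in J}(1-p_i)$. For a family of ranges $\mathcal{R}$ (subsets of $[n]$), the maximum range discrepancy of a sample distribution $\Omega$ is $\Delta=\max_{S\in\operatorname{supp}\Omega}\max_{R\in\mathcal{R}}\big|\,|S\cap R|-\sum_{i\in R}p_i\,\big|$. *)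

(* Defs.v *)
From HB Require Import structures.
From mathcomp Require Import all_boot all_order all_algebra.
From mathcomp Require Import reals.
Set Implicit Arguments. Unset Strict Implicit. Unset Printing Implicit Defensive.
Import Order.TTheory GRing.Theory Num.Theory.
Local Open Scope ring_scope.

Section VarOpt.
Variables (R : realType) (n : nat).

Definition valid_probs (p : 'I_n -> R) : Prop :=
  (forall i, 0 <= p i <= 1) /\ exists s : nat, \sum_i p i = s%:R.

Definition is_sample_distr (mu : {set 'I_n} -> R) : Prop :=
  (forall S, 0 <= mu S) /\ \sum_S mu S = 1.

Definition Pr (mu : {set 'I_n} -> R) (E : pred {set 'I_n}) : R :=
  \sum_(S | E S) mu S.

Definition is_varopt (mu : {set 'I_n} -> R) (p : 'I_n -> R) : Prop :=
  [/\ (forall i, Pr mu (fun S => i \in S) = p i),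
      Pr mu (fun S => #|S|%:R != \sum_i p i) = 0 &
      (forall J : {set 'I_n},
          Pr mu (fun S => J \subset S) <= \prod_(i in J) p i /\
          Pr mu (fun S => [disjoint J & S]) <= \prod_(i in J) (1 - p i))].

(* the interval range {i1, ..., i2} (0-indexed) *)
Definition interval (i1 i2 : nat) : {set 'I_n} :=
  [set i : 'I_n | (i1 <= i)%N && (i <= i2)%N].

Definition interval_disc_le (mu : {set 'I_n} -> R) (p : 'I_n -> R) (D : R) : Prop :=
  forall S, mu S != 0 -> forall i1 i2 : nat, (i1 <= i2 < n)%N ->
    `| #|S :&: interval i1 i2|%:R - \sum_(i in interval i1 i2) p i | <= D.

End VarOpt.

(* Main.v *)
Require Import Defs.
From HB Require Import structures.
From mathcomp Require Import all_boot all_order all_algebra.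
From mathcomp Require Import reals.
From mathcomp Require Import zify ring lra.
Import Order.TTheory GRing.Theory Num.Theory.
Local Open Scope ring_scope.

Module Aux.
Set Implicit Arguments. Unset Strict Implicit. Unset Printing Implicit Defensive.


Definition pre n (S : {set 'I_n}) (m : nat) : nat := #|[set i in S | (i < m)%N]|.

Lemma pre_S_set n (S : {set 'I_n}) (i : 'I_n) : [set j in S | (j < i.+1)%N] =
  if i \in S then i |: [set j in S | (j < i)%N] else [set j in S | (j < i)%N].
Proof.
apply/setP => j; case: ifP => iS; rewrite !inE ltnS leq_eqVlt;
case: (eqVneq j i) => [->|ne]; rewrite ?iS ?ltnn ?eqxx ?orbF //=.
all: have ne' : (j == i :> nat) = false by apply/negbTE/eqP => /val_inj/eqP; rewrite (negbTE ne).
all: by rewrite ne'.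
Qed.

Lemma pre_S n (S : {set 'I_n}) (i : 'I_n) :
  pre S i.+1 = (pre S i + (i \in S))%N.
Proof.
rewrite /pre pre_S_set.
case: ifP => iS; last by rewrite addn0.
by rewrite cardsU1 inE ltnn andbF addnC.
Qed.

Lemma pre_ge n (S : {set 'I_n}) m : (n <= m)%N -> pre S m = #|S|.
Proof.
move=> le; rewrite /pre; apply: eq_card => j; rewrite !inE.
by rewrite (leq_trans (ltn_ord j) le) andbT.
Qed.

Lemma pre_mono n (S : {set 'I_n}) a b : (a <= b)%N -> (pre S a <= pre S b)%N.
Proof.
move=> le; apply: subset_leq_card; apply/subsetP => j; rewrite !inE.
by case/andP=> -> /leq_trans ->.
Qed.

Lemma card_inter_interval n (A : {set 'I_n}) i1 i2 : (i1 <= i2.+1)%N ->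
  #|A :&: Defs.interval n i1 i2| = (pre A i2.+1 - pre A i1)%N.
Proof.
move=> le; rewrite /pre.
have sub : [set i in A | (i < i1)%N] \subset [set i in A | (i < i2.+1)%N].
  apply/subsetP => j; rewrite !inE; case/andP=> -> /leq_trans; exact.
rewrite -(cardsID [set i in A | (i < i1)%N] [set i in A | (i < i2.+1)%N]).
rewrite (setIidPr sub) addKn; apply: eq_card => j; rewrite !inE ltnS.
by case: (j \in A) => //=; rewrite -leqNgt andbC.
Qed.

Lemma pre_setT n m : (m <= n)%N -> pre [set: 'I_n] m = m.
Proof.
elim: m => [|m IH] lt.
  by rewrite /pre; apply/eqP; rewrite cards_eq0; apply/eqP/setP => j; rewrite !inE.
have := pre_S [set: 'I_n] (Ordinal lt); rewrite /= inE => ->.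
by rewrite IH ?addn1 // ltnW.
Qed.


Section Affine.
Variable R : realType.

Lemma aff1 (al be d1 d2 x : R) : 0 < d1 + d2 ->
  d2 / (d1 + d2) * (al + be * (x + d1)) + d1 / (d1 + d2) * (al + be * (x - d2))
  = al + be * x.
Proof. move=> h; field; lra. Qed.

Lemma aff2 (al be d1 d2 x : R) : 0 < d1 + d2 ->
  d2 / (d1 + d2) * (al + be * (x - d1)) + d1 / (d1 + d2) * (al + be * (x + d2))
  = al + be * x.
Proof. move=> h; field; lra. Qed.

Lemma aff3 (al be d1 d2 x z : R) : 0 < d1 + d2 -> 0 <= d1 -> 0 <= d2 ->
  d2 / (d1 + d2) * ((al + be * (x + d1)) * (al + be * (z - d1)))
  + d1 / (d1 + d2) * ((al + be * (x - d2)) * (al + be * (z + d2)))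
  <= (al + be * x) * (al + be * z).
Proof.
move=> h h1 h2.
have -> : d2 / (d1 + d2) * ((al + be * (x + d1)) * (al + be * (z - d1)))
  + d1 / (d1 + d2) * ((al + be * (x - d2)) * (al + be * (z + d2)))
  = (al + be * x) * (al + be * z) - be ^+ 2 * (d1 * d2) by field; lra.
rewrite lerBlDr lerDl; apply: mulr_ge0; [exact: sqr_ge0 | exact: mulr_ge0].
Qed.
End Affine.

Section Agg.
Variables (R : realType) (n : nat).
Implicit Types (y : 'I_n -> R) (S J : {set 'I_n}).

Definition frac y (i : 'I_n) : bool := (0 < y i) && (y i < 1).

Definition first_frac y : option 'I_n :=
  [pick a | frac y a & [forall j : 'I_n, (j < a)%N ==> ~~ frac y j]].

Definition second_frac y (a : 'I_n) : option 'I_n :=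
  [pick b | frac y b & ((a < b)%N && [forall j : 'I_n, ((a < j) && (j < b))%N ==> ~~ frac y j])].

Definition upd y (a b : 'I_n) (ta tb : R) : 'I_n -> R :=
  fun i => if i == a then ta else if i == b then tb else y i.

Definition dd1 y a b := Num.min (1 - y a) (y b).
Definition dd2 y a b := Num.min (y a) (1 - y b).

Definition bset y : {set 'I_n} := [set i | y i == 1].
Definition base y S : R := (S == bset y)%:R.

Fixpoint agg (k : nat) y S : R :=
  match k with
  | 0 => base y S
  | k'.+1 =>
    match first_frac y with
    | Some a =>
      match second_frac y a with
      | Some b =>
          let d1 := dd1 y a b in let d2 := dd2 y a b in
          d2 / (d1 + d2) * agg k' (upd y a b (y a + d1) (y b - d1)) S
          + d1 / (d1 + d2) * agg k' (upd y a b (y a - d2) (y b + d2)) S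
      | None => base y S
      end
    | None => base y S
    end
  end.

Lemma prod_upd (G : R -> R) y a b ta tb J : a != b ->
  \prod_(i in J) G (upd y a b ta tb i) =
  (if a \in J then G ta else 1) * ((if b \in J then G tb else 1) *
    \prod_(i | (i != a) && (i != b)) (if i \in J then G (y i) else 1)).
Proof.
move=> ab; rewrite big_mkcond (bigD1 a) //= (bigD1 b) 1?eq_sym //=.
have ba : (b == a) = false by rewrite eq_sym (negbTE ab).
rewrite /upd eqxx ba eqxx.
congr (_ * (_ * _)); apply: eq_bigr => i /andP[ia ib].
by rewrite (negbTE ia) (negbTE ib).
Qed.

Lemma upd_id y a b : upd y a b (y a) (y b) =1 y.
Proof. by move=> i; rewrite /upd; case: eqP => [->|_] //; case: eqP => [->|]. Qed.

Lemma sum_upd (P : pred 'I_n) y a b ta tb : a != b ->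
  \sum_(i | P i) upd y a b ta tb i =
  \sum_(i | P i) y i + (if P a then ta - y a else 0) + (if P b then tb - y b else 0).
Proof.
move=> ab.
rewrite big_mkcond [in RHS]big_mkcond (bigD1 a) //= (bigD1 b) 1?eq_sym //=.
rewrite [in RHS](bigD1 a) //= [in RHS](bigD1 b) 1?eq_sym //=.
have ba : (b == a) = false by rewrite eq_sym (negbTE ab).
rewrite /upd eqxx ba eqxx.
have -> : \sum_(i | (i != a) && (i != b)) (if P i then (if i == a then ta else if i == b then tb else y i) else 0)
  = \sum_(i | (i != a) && (i != b)) (if P i then y i else 0).
  by apply: eq_bigr => i /andP[ia ib]; rewrite (negbTE ia) (negbTE ib).
by case: (P a); case: (P b); ring.
Qed.


Lemma first_fracS y a : first_frac y = Some a ->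
  frac y a /\ forall j : 'I_n, (j < a)%N -> ~~ frac y j.
Proof.
rewrite /first_frac; case: pickP => // x /andP[fx /forallP h] [<-].
by split => // j jx; exact: (implyP (h j) jx).
Qed.

Lemma first_fracN y : first_frac y = None -> forall i, ~~ frac y i.
Proof.
rewrite /first_frac; case: pickP => // h _ i; apply/negP => fi.
case: (arg_minnP (fun j : 'I_n => val j) fi) => m fm minm.
have := h m; rewrite fm /=; move/negbT/negP; apply.
apply/forallP => j; apply/implyP => jm; apply/negP => fj.
by have := minm j fj; rewrite leqNgt jm.
Qed.

Lemma second_fracS y a b : second_frac y a = Some b ->
  [/\ frac y b, (a < b)%N & forall j : 'I_n, (a < j)%N -> (j < b)%N -> ~~ frac y j].
Proof.
rewrite /second_frac; case: pickP => // x /and3P[fx ax /forallP h] [<-].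
by split => // j j1 j2; exact: (implyP (h j) (introT andP (conj j1 j2))).
Qed.

Lemma second_fracN y a : first_frac y = Some a -> second_frac y a = None ->
  forall j, j != a -> ~~ frac y j.
Proof.
move=> /first_fracS [fa mina]; rewrite /second_frac; case: pickP => // h _ j ja.
apply/negP => fj.
have aj : (a < j)%N.
  case: (ltngtP a j) => // [ja'|e]; first by move: (mina j ja'); rewrite fj.
  by move: ja; rewrite (val_inj e) eqxx.
have P0 : (frac y j && (a < j)%N) by rewrite fj aj.
case: (@arg_minnP _ j (fun k : 'I_n => frac y k && (a < k)%N) (fun j : 'I_n => val j) P0) => m /andP[fm am] minm.
have := h m; rewrite fm am /=; move/negbT/negP; apply.
apply/forallP => k; apply/implyP => /andP[ak km]; apply/negP => fk.
by have := minm k; rewrite fk ak => /(_ isT); rewrite leqNgt km.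
Qed.


Definition inv y := (forall i, 0 <= y i <= 1) /\ exists s : nat, \sum_i y i = s%:R.
Definition nfrac y := #|[set i | frac y i]|.

Definition good (mu : {set 'I_n} -> R) y :=
 [/\ (forall S, 0 <= mu S), \sum_S mu S = 1,
     (forall i, Pr mu (fun S => i \in S) = y i),
     (forall J, Pr mu (fun S => J \subset S) <= \prod_(i in J) y i /\
                Pr mu (fun S => [disjoint J & S]) <= \prod_(i in J) (1 - y i))
   & (forall S, mu S != 0 -> #|S|%:R = \sum_i y i /\
        forall m : nat, `|(pre S m)%:R - \sum_(i : 'I_n | (i < m)%N) y i| < 1)].

Lemma nonfrac_val y i : 0 <= y i <= 1 -> ~~ frac y i -> y i = (y i == 1)%:R.
Proof.
move=> /andP[h0 h1]; rewrite /frac negb_and -!leNgt => h.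
case: eqP => [->|ne] //=.
have : y i < 1 by rewrite lt_neqAle h1 andbT; apply/eqP.
move=> lt1; case/orP: h => h; first by apply/le_anti; rewrite h h0.
by move: (lt_le_trans lt1 h); rewrite ltxx.
Qed.

Lemma Pr_pt (T : {set 'I_n}) (E : pred {set 'I_n}) :
  Pr (fun S => (S == T)%:R : R) E = (E T)%:R.
Proof.
rewrite /Pr; case ET: (E T).
  rewrite (bigD1 T) //= eqxx big1 ?addr0 // => S /andP[_ ST].
  by rewrite (negbTE ST).
rewrite big1 // => S ES; case: eqP => // ST.
by move: ES; rewrite ST ET.
Qed.

Lemma sum_ind (P : pred 'I_n) (T : {set 'I_n}) :
  \sum_(i | P i) ((i \in T)%:R : R) = #|[set i in T | P i]|%:R.
Proof.
rewrite -natr_sum; congr _%:R; rewrite -sum1_card big_mkcond [RHS]big_mkcond /=.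
by apply: eq_bigr => i _; rewrite inE; case: (i \in T); case: (P i).
Qed.

Lemma sum_all (mu : {set 'I_n} -> R) : Pr mu predT = \sum_S mu S.
Proof. by []. Qed.

Lemma base_good y : (forall i, 0 <= y i <= 1) -> (forall i, ~~ frac y i) ->
  good (base y) y.
Proof.
move=> hb hf.
have yT : forall i, y i = (i \in bset y)%:R by move=> i; rewrite /bset inE; apply: nonfrac_val.
split.
- by move=> S; rewrite /base ler0n.
- by rewrite -sum_all /base Pr_pt.
- by move=> i; rewrite /base Pr_pt yT.
- move=> J; rewrite /base !Pr_pt; split.
    have [sub|nsub] := boolP (J \subset bset y); last first.
      by apply: prodr_ge0 => i _; case/andP: (hb i).
    rewrite big1 // => i iJ; rewrite yT (subsetP sub i iJ).
    by [].
  have [dis|ndis] := boolP [disjoint J & bset y]; last first.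
    by apply: prodr_ge0 => i _; case/andP: (hb i) => _; rewrite subr_ge0.
  rewrite big1 // => i iJ; rewrite yT (disjointFr dis iJ) subr0.
  by [].
- move=> S; rewrite /base; have [-> _|ne] := eqVneq S (bset y); last by rewrite eqxx.
  split.
    rewrite (eq_bigr (fun i => ((i \in bset y)%:R : R))) ?sum_ind; last by move=> i _; rewrite yT.
    by congr _%:R; apply: eq_card => i; rewrite !inE andbT.
  move=> m.
  rewrite (eq_bigr (fun i => ((i \in bset y)%:R : R))) ?sum_ind; last by move=> i _; rewrite yT.
  by rewrite /pre subrr normr0 ltr01.
Qed.


Lemma eqLe (x z : R) : x = z -> x <= z. Proof. by move=> ->. Qed.

Lemma comb_prod (w1 w2 c A1 A2 B1 B2 A B : R) : 0 <= c -> 0 <= w1 -> 0 <= w2 ->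
  w1 + w2 = 1 -> w1 * A1 + w2 * A2 = A -> w1 * B1 + w2 * B2 = B ->
  w1 * (A1 * B1) + w2 * (A2 * B2) <= A * B ->
  forall (pa pb : bool),
  w1 * ((if pa then A1 else 1) * ((if pb then B1 else 1) * c)) +
  w2 * ((if pa then A2 else 1) * ((if pb then B2 else 1) * c)) <=
  (if pa then A else 1) * ((if pb then B else 1) * c).
Proof.
move=> c0 w10 w20 w12 hA hB hAB [] [] /=.
- have -> : w1 * (A1 * (B1 * c)) + w2 * (A2 * (B2 * c)) = (w1 * (A1 * B1) + w2 * (A2 * B2)) * c by ring.
  rewrite (mulrA A); by apply: ler_wpM2r.
- rewrite !mul1r -hA; apply: eqLe; ring.
- rewrite !mul1r -hB; apply: eqLe; ring.
- rewrite !mul1r; apply: eqLe; rewrite -mulrDl w12 mul1r //.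
Qed.

Lemma int_close (C N : nat) (ta ya : R) : 0 <= ta <= 1 -> 0 < ya < 1 ->
  `|C%:R - (N%:R + ta)| < 1 -> `|C%:R - (N%:R + ya)| < 1.
Proof.
move=> /andP[t0 t1] /andP[y0 y1]; rewrite ltr_norml => /andP[h1 h2].
have c1 : (N < C + 1)%N by rewrite -(ltr_nat R) natrD; lra.
have c2 : (C < N + 2)%N by rewrite -(ltr_nat R) natrD; lra.
have [->|->] : C = N \/ C = (N + 1)%N by lia.
  by rewrite opprD addrA subrr add0r normrN gtr0_norm.
have -> : (N + 1)%:R - (N%:R + ya) = 1 - ya :> R by rewrite natrD; ring.
rewrite ger0_norm; lra.
Qed.

Lemma support_step y a b ta tb S :
  first_frac y = Some a -> second_frac y a = Some b -> (forall i, 0 <= y i <= 1) ->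
  0 <= ta <= 1 -> ta + tb = y a + y b ->
  (#|S|%:R = \sum_i upd y a b ta tb i /\ forall m : nat,
     `|(pre S m)%:R - \sum_(i : 'I_n | (i < m)%N) upd y a b ta tb i| < 1) ->
  (#|S|%:R = \sum_i y i /\ forall m : nat,
     `|(pre S m)%:R - \sum_(i : 'I_n | (i < m)%N) y i| < 1).
Proof.
move=> ef es hb hta htb [h1 h2].
have [fa mina] := first_fracS ef.
have [fb ab minb] := second_fracS es.
have anb : a != b by apply/eqP => e; rewrite e ltnn in ab.
split.
  rewrite h1 (sum_upd predT y ta tb anb) /=; lra.
move=> m; have := h2 m; rewrite (sum_upd (fun i : 'I_n => (i < m)%N) y ta tb anb) /=.
case: (ltnP b m) => bm.
  rewrite (ltn_trans ab bm).
  have -> : \sum_(i : 'I_n | (i < m)%N) y i + (ta - y a) + (tb - y b) =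
            \sum_(i : 'I_n | (i < m)%N) y i by lra.
  by [].
case: (ltnP a m) => am; last first.
  by rewrite !addr0.
rewrite addr0.
rewrite (bigD1 a) //=.
have -> : \sum_(i : 'I_n | (i < m)%N && (i != a)) y i =
          (\sum_(i : 'I_n | (i < m)%N && (i != a)) nat_of_bool (y i == 1%R))%:R.
  rewrite natr_sum; apply: eq_bigr => i /andP[im ia]; apply: nonfrac_val => //.
  case: (ltngtP i a) => [ia'|ai|e]; first exact: mina.
  - by apply: minb => //; apply: leq_trans im bm.
  - by move: ia; rewrite (val_inj e) eqxx.
move: (\sum_(i : 'I_n | (i < m)%N && (i != a)) nat_of_bool (y i == 1%R))%N => N.
have -> : y a + N%:R + (ta - y a) = N%:R + ta by ring.
rewrite (addrC (y a)).
move: fa; rewrite /frac => fa.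
exact: int_close.
Qed.

Lemma step_good y a b mu1 mu2 :
  inv y -> first_frac y = Some a -> second_frac y a = Some b ->
  good mu1 (upd y a b (y a + dd1 y a b) (y b - dd1 y a b)) ->
  good mu2 (upd y a b (y a - dd2 y a b) (y b + dd2 y a b)) ->
  good (fun S => dd2 y a b / (dd1 y a b + dd2 y a b) * mu1 S
               + dd1 y a b / (dd1 y a b + dd2 y a b) * mu2 S) y.
Proof.
move=> [hb [s hs]] ef es [g10 g11 g12 g13 g14] [g20 g21 g22 g23 g24].
have [fa mina] := first_fracS ef.
have [fb ab minb] := second_fracS es.
have anb : a != b by apply/eqP => e; rewrite e ltnn in ab.
have ba : (b == a) = false by rewrite eq_sym (negbTE anb).
move: fa fb; rewrite /frac => /andP[ya0 ya1] /andP[yb0 yb1].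
have [d1p [d1a d1b]] : 0 < dd1 y a b /\ dd1 y a b <= 1 - y a /\ dd1 y a b <= y b.
  by rewrite /dd1 /Num.min; case: (ltP (1 - y a) (y b)) => h; (repeat split); lra.
have [d2p [d2a d2b]] : 0 < dd2 y a b /\ dd2 y a b <= y a /\ dd2 y a b <= 1 - y b.
  by rewrite /dd2 /Num.min; case: (ltP (y a) (1 - y b)) => h; (repeat split); lra.
move: (dd1 y a b) (dd2 y a b) d1p d1a d1b d2p d2a d2b g12 g13 g14 g22 g23 g24.
move=> d1 d2 d1p d1a d1b d2p d2a d2b g12 g13 g14 g22 g23 g24.
have dp : 0 < d1 + d2 by lra.
have w10 : 0 <= d2 / (d1 + d2) by rewrite divr_ge0 // ltW.
have w20 : 0 <= d1 / (d1 + d2) by rewrite divr_ge0 // ltW.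
have w12 : d2 / (d1 + d2) + d1 / (d1 + d2) = 1 by field; lra.
move: (d2 / (d1 + d2)) (d1 / (d1 + d2)) w10 w20 w12 (@aff1 R 0 1 d1 d2 (y a) dp)
  (@aff2 R 0 1 d1 d2 (y b) dp) (@aff3 R 0 1 d1 d2 (y a) (y b) dp (ltW d1p) (ltW d2p))
  (@aff1 R 1 (-1) d1 d2 (y a) dp) (@aff2 R 1 (-1) d1 d2 (y b) dp)
  (@aff3 R 1 (-1) d1 d2 (y a) (y b) dp (ltW d1p) (ltW d2p)).
rewrite !add0r !mul1r !mulN1r.
move=> w1 w2 w10 w20 w12 e1 e2 e3 e4 e5 e6.
have PrL : forall E, Pr (fun S => w1 * mu1 S + w2 * mu2 S) E = w1 * Pr mu1 E + w2 * Pr mu2 E.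
  by move=> E; rewrite /Pr big_split /= -!mulr_sumr.
split.
- by move=> S; apply: addr_ge0; apply: mulr_ge0.
- by rewrite big_split /= -!mulr_sumr g11 g21 !mulr1.
- move=> i; rewrite PrL g12 g22 /upd.
  case: eqP => [->|_]; first by [].
  case: eqP => [->|_]; first by [].
  by rewrite -mulrDl w12 mul1r.
- move=> J; rewrite !PrL; split.
    apply: le_trans (lerD (ler_wpM2l w10 (proj1 (g13 J))) (ler_wpM2l w20 (proj1 (g23 J)))) _.
    rewrite !(prod_upd id y _ _ J anb).
    rewrite -(eq_bigr _ (fun i _ => upd_id y a b i)) (prod_upd id y _ _ J anb) /=.
    apply: comb_prod => //.
    by apply: prodr_ge0 => i _; case: ifP => // _; case/andP: (hb i).
  apply: le_trans (lerD (ler_wpM2l w10 (proj2 (g13 J))) (ler_wpM2l w20 (proj2 (g23 J)))) _.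
  rewrite !(prod_upd (fun x => 1 - x) y _ _ J anb).
  rewrite -(eq_bigr _ (fun i _ => congr1 (fun x => 1 - x) (upd_id y a b i))).
  rewrite (prod_upd (fun x => 1 - x) y _ _ J anb) /=.
  apply: comb_prod => //.
  by apply: prodr_ge0 => i _; case: ifP => // _; case/andP: (hb i) => _; rewrite subr_ge0.
- move=> S nz.
  have [nz1|nz2] : mu1 S != 0 \/ mu2 S != 0.
    case: (eqVneq (mu1 S) 0) => [z1|]; last by left.
    case: (eqVneq (mu2 S) 0) => [z2|]; last by right.
    by move: nz; rewrite z1 z2 !mulr0 addr0 eqxx.
  + apply: (support_step (ta := y a + d1) (tb := y b - d1) ef es hb); first lra.
      by ring.
    exact: g14.
  + apply: (support_step (ta := y a - d2) (tb := y b + d2) ef es hb); first lra.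
      by ring.
    exact: g24.
Qed.


Lemma upd_inv y a b ta tb : inv y -> a != b -> 0 <= ta <= 1 -> 0 <= tb <= 1 ->
  ta + tb = y a + y b -> inv (upd y a b ta tb).
Proof.
move=> [hb [s hs]] anb hta htb e; split.
  by move=> i; rewrite /upd; case: ifP => _ //; case: ifP => _ //.
exists s; rewrite (sum_upd predT y ta tb anb) /= hs; lra.
Qed.

Lemma nfrac_lt y a b ta tb : frac y a -> frac y b -> a != b ->
  ~~ frac (upd y a b ta tb) a || ~~ frac (upd y a b ta tb) b ->
  (nfrac (upd y a b ta tb) < nfrac y)%N.
Proof.
move=> fa fb anb h; rewrite /nfrac; apply: proper_card; apply/properP; split.
  apply/subsetP => i; rewrite !inE /frac /upd.
  case: (eqVneq i a) => [->|_] /=; first by move=> _; exact: fa.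
  case: (eqVneq i b) => [->|_] /=; last by [].
  by move=> _; move: fb; rewrite /frac.
case/orP: h => h; [exists a | exists b]; rewrite !inE //.
Qed.

Lemma none_second y a s : (forall i, 0 <= y i <= 1) -> \sum_i y i = s%:R ->
  first_frac y = Some a -> second_frac y a = None -> False.
Proof.
move=> hb hs ef es.
have [fa _] := first_fracS ef.
have nf := second_fracN ef es.
move: hs; rewrite (bigD1 a) //=.
have -> : \sum_(i | i != a) y i = (\sum_(i | i != a) nat_of_bool (y i == 1%R))%:R.
  by rewrite natr_sum; apply: eq_bigr => i ia; apply: nonfrac_val => //; apply: nf.
move: (\sum_(i | i != a) nat_of_bool (y i == 1%R))%N => N e.
move: fa; rewrite /frac => /andP[h0 h1].
have c1 : (N < s)%N by rewrite -(ltr_nat R); lra.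
have c2 : (s < N + 1)%N by rewrite -(ltr_nat R) natrD; lra.
lia.
Qed.

Lemma agg_good k : forall y, inv y -> (nfrac y <= k)%N -> good (agg k y) y.
Proof.
elim: k => [|k IH] y hy hk.
  apply: base_good; first exact: hy.1.
  move=> i; apply/negP => fi.
  have : i \in [set i | frac y i] by rewrite inE.
  move: hk; rewrite leqn0 cards_eq0 => /eqP ->; by rewrite inE.
have [hb [s hs]] := hy.
case ef: (first_frac y) => [a|]; last first.
  rewrite /= ef; exact: base_good hb (first_fracN ef).
case es: (second_frac y a) => [b|]; last first.
  by exfalso; apply: (none_second hb hs ef es).
rewrite /= ef es.
have [fa _] := first_fracS ef.
have [fb ab _] := second_fracS es.
have anb : a != b by apply/eqP => e; rewrite e ltnn in ab.
move: (fa) (fb); rewrite /frac => /andP[ya0 ya1] /andP[yb0 yb1].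
have hd1 : [/\ 0 < dd1 y a b, dd1 y a b <= 1 - y a, dd1 y a b <= y b &
   (dd1 y a b = 1 - y a \/ dd1 y a b = y b)].
  by rewrite /dd1 /Num.min; case: (ltP (1 - y a) (y b)) => h /=; split; try lra; first [by left | by right].
have hd2 : [/\ 0 < dd2 y a b, dd2 y a b <= y a, dd2 y a b <= 1 - y b &
   (dd2 y a b = y a \/ dd2 y a b = 1 - y b)].
  by rewrite /dd2 /Num.min; case: (ltP (y a) (1 - y b)) => h /=; split; try lra; first [by left | by right].
have ua : forall ta tb, upd y a b ta tb a = ta by move=> ta tb; rewrite /upd eqxx.
have ub : forall ta tb, upd y a b ta tb b = tb.
  by move=> ta tb; rewrite /upd eqxx (negbTE (_ : b != a)) // eq_sym.
apply: step_good => //.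
- case: hd1 => d0 d1a d1b dor.
  apply: IH.
    apply: upd_inv => //; [apply/andP; split | apply/andP; split | ]; lra.
  rewrite -ltnS; apply: leq_trans hk; apply: nfrac_lt => //.
  rewrite /frac ua ub; case: dor => ->; apply/orP; [left|right]; apply/negP => /andP[]; lra.
- case: hd2 => d0 d2a d2b dor.
  apply: IH.
    apply: upd_inv => //; [apply/andP; split | apply/andP; split | ]; lra.
  rewrite -ltnS; apply: leq_trans hk; apply: nfrac_lt => //.
  rewrite /frac ua ub; case: dor => ->; apply/orP; [left|right]; apply/negP => /andP[]; lra.
Qed.

End Agg.


Section Final1.
Variable R : realType.

Lemma part1 (n : nat) : (1 <= n)%N -> forall p : 'I_n -> R, valid_probs p ->
  exists mu : {set 'I_n} -> R,
    [/\ is_sample_distr mu, is_varopt mu p & interval_disc_le mu p 2].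
Proof.
move=> _ p [hb [s hs]].
have hy : inv p by split => //; exists s.
have hk : (nfrac p <= n)%N.
  by rewrite /nfrac -[X in (_ <= X)%N](card_ord n); apply: max_card.
have [g0 g1 g2 g3 g4] := agg_good hy hk.
exists (agg n p); split.
- by split.
- split => //.
  rewrite /Pr big1 // => S ne.
  case: (eqVneq (agg n p S) 0) => // nz.
  by have [h _] := g4 S nz; rewrite h eqxx in ne.
- move=> S nz i1 i2 /andP[le lt].
  have [_ h] := g4 S nz.
  have le' : (i1 <= i2.+1)%N by apply: leqW.
  rewrite card_inter_interval //.
  have e : \sum_(i : 'I_n | (i < i2.+1)%N) p i =
      \sum_(i : 'I_n | (i < i1)%N) p i + \sum_(i in Defs.interval n i1 i2) p i.
    rewrite (bigID (fun i : 'I_n => (i < i1)%N)) /=.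
    congr (_ + _); apply: eq_bigl => i.
      case: (ltnP i i1) => h1; rewrite ?andbF ?andbT //.
      exact: leq_trans h1 le'.
    by rewrite inE ltnS -leqNgt andbC.
  have -> : \sum_(i in Defs.interval n i1 i2) p i =
    \sum_(i : 'I_n | (i < i2.+1)%N) p i - \sum_(i : 'I_n | (i < i1)%N) p i.
    by rewrite e addrC addKr.
  rewrite natrB ?pre_mono //.
  have := h i2.+1; have := h i1; rewrite !ltr_norml => /andP[a1 a2] /andP[b1 b2].
  rewrite ler_norml; apply/andP; split; lra.
Qed.

End Final1.


Section P2.
Variable R : realType.

Lemma real_to_nat (K c L : nat) (D : R) : (0 < K)%N ->
  K%:R * D < 2 * K%:R - 2 ->
  `|c%:R - L%:R / K%:R| <= D ->
  (K * c + 2 < L + 2 * K)%N /\ (L + 2 < K * c + 2 * K)%N.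
Proof.
move=> K0 hD; rewrite ler_norml => /andP[h1 h2].
have kpos : 0 < K%:R :> R by rewrite ltr0n.
have e : K%:R * (c%:R - L%:R / K%:R) = K%:R * c%:R - L%:R :> R.
  by rewrite mulrBr mulrCA divff ?mulr1 // gt_eqF.
have h1' := ler_wpM2l (ltW kpos) h1.
have h2' := ler_wpM2l (ltW kpos) h2.
rewrite e in h1' h2'.
split; rewrite -(ltr_nat R) !natrD !natrM; lra.
Qed.

Lemma residue_missing (n K : nat) (S : {set 'I_n}) (D : R) :
  (2 <= K)%N -> K%:R * D < 2 * K%:R - 2 ->
  (forall i1 i2 : nat, (i1 <= i2 < n)%N ->
    `|(pre S i2.+1 - pre S i1)%:R - (i2.+1 - i1)%:R / K%:R| <= D) ->
  exists r : 'I_K, forall i : 'I_n, i \in S -> (i %% K)%N != r.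
Proof.
move=> K2 hD H.
have K0 : (0 < K)%N by apply: leq_trans K2.
pose E (z : 'I_n) := (z + K * (#|S| - pre S z))%N.
have key : forall x y : 'I_n, x \in S -> y \in S -> (x < y)%N ->
    (E x <= E y + (K - 2))%N /\ (E y <= E x + (K - 2))%N.
  move=> x y xS yS xy.
  have pxy : (pre S x.+1 <= pre S y)%N by apply: pre_mono.
  rewrite pre_S xS /= in pxy.
  have pyN : (pre S y <= #|S|)%N by rewrite -(pre_ge S (leqnn n)); apply: pre_mono; apply: ltnW.
  have c0 : (x <= y < n)%N by rewrite (ltnW xy) ltn_ord.
  have := real_to_nat K0 hD (H x y c0); rewrite pre_S yS /= => [[i1 i2]].
  have eK : forall u v : nat, (u <= v)%N -> (v <= #|S|)%N -> (K * (#|S| - u) = K * (#|S| - v) + K * (v - u))%N.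
    by move=> u v uv vN; rewrite -mulnDr; congr (K * _)%N; lia.
  rewrite /E (eK _ _ (leq_trans (leq_addr _ _) pxy) pyN).
  have eb : (K * (pre S y + 1 - pre S x) = K * (pre S y - pre S x) + K)%N.
    by rewrite (_ : (pre S y + 1 - pre S x = (pre S y - pre S x) + 1)%N) ?mulnDr ?muln1 //; lia.
  rewrite eb in i1 i2.
  case: (ltnP y.+1 (y - 1).+1) => [|_]; first by lia.
  case: (leqP (x.+2) y) => xy2.
  - have hex := H x.+1 (y.-1).
    have c1 : (x.+1 <= y.-1 < n)%N by apply/andP; split; [lia| apply: leq_ltn_trans (ltn_ord y); lia].
    have := real_to_nat K0 hD (hex c1) => [[j1 j2]].
    rewrite (_ : (y.-1).+1 = y) in j1 j2; last by lia.
    have := pre_S S x; rewrite xS /= => ex. rewrite ex in j1 j2.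
    have eb2 : (K * (pre S y - (pre S x + 1)) + K = K * (pre S y - pre S x))%N.
      by rewrite (_ : (pre S y - pre S x = (pre S y - (pre S x + 1)) + 1)%N) ?mulnDr ?muln1 //; lia.
    rewrite -eb2 in i1 i2.
    split; lia.
  - have yx : y = x.+1 :> nat by lia.
    exfalso.
    have ab : (pre S y - pre S x >= 1)%N by lia.
    have : (K * 1 <= K * (pre S y - pre S x))%N by rewrite leq_mul2l ab orbT.
    move=> h; lia.
case: (set_0Vmem S) => [-> | [i0 i0S]].
  by exists (Ordinal K0) => i; rewrite inE.
case: (arg_minnP E i0S) => x0 x0S minE.
have ltr : ((E x0 + (K - 1)) %% K < K)%N by rewrite ltn_mod.
exists (Ordinal ltr) => i iS; apply/negP => /eqP /= eqi.
have bnd : (E x0 <= E i <= E x0 + (K - 2))%N.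
  rewrite minE //=.
  case: (ltngtP x0 i) => [lt|lt|eq].
  - by case: (key _ _ x0S iS lt) => _ ->.
  - by case: (key _ _ iS x0S lt) => ->.
  - by rewrite (val_inj eq) leq_addr.
have Emod : (E i %% K = i %% K)%N by rewrite /E addnC mulnC modnMDl.
pose d := (E i - E x0)%N.
have Ei : E i = (E x0 + d)%N by rewrite /d; lia.
move: Emod; rewrite eqi Ei => /eqP; rewrite eqn_modDl !modn_small; [lia | lia | ].
by rewrite /d; lia.
Qed.


Lemma bern a s : (a ^ s * (a + s) <= (a + 1) ^ s * a)%N.
Proof.
elim: s => [|s IH]; first by rewrite !expn0 !mul1n addn0.
rewrite !expnS.
have := leq_mul (leqnn (a + 1)) IH.
move: (a ^ s)%N ((a + 1) ^ s)%N => X Y h; nia.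
Qed.

Lemma K_bound K : (2 <= K)%N -> (K * (K - 1) ^ (K * K) < K ^ (K * K))%N.
Proof.
move=> K2.
have h := bern (K - 1) (K * K).
rewrite (_ : (K - 1 + 1 = K)%N) in h; last by lia.
have pos : (0 < (K - 1) ^ (K * K))%N by rewrite expn_gt0; apply/orP; left; lia.
rewrite -(ltn_pmul2r (_ : (0 < K - 1)%N)); last by lia.
apply: leq_trans _ h; move: ((K - 1) ^ (K * K))%N pos => X pos; nia.
Qed.

Lemma part2 (D : R) : D < 2 ->
  exists (n : nat) (p : 'I_n -> R), (1 <= n)%N /\ valid_probs p /\
    forall mu : {set 'I_n} -> R,
      is_sample_distr mu -> is_varopt mu p -> ~ interval_disc_le mu p D.
Proof.
move=> D2.
have D2' : 0 < 2 - D by rewrite subr_gt0.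
pose b := Num.bound (2 / (2 - D)).
have hb : 2 / (2 - D) < b%:R by apply: archi_boundP; rewrite divr_ge0 // ltW.
pose K := (b + 2)%N.
have K2 : (2 <= K)%N by rewrite /K leq_addl.
have K0 : (0 < K)%N by apply: leq_trans K2.
have kpos : 0 < K%:R :> R by rewrite ltr0n.
have hD : K%:R * D < 2 * K%:R - 2.
  have : 2 < b%:R * (2 - D).
    by rewrite -ltr_pdivrMr.
  have : b%:R <= K%:R :> R by rewrite ler_nat /K leq_addr.
  move=> bK h2.
  have : b%:R * (2 - D) <= K%:R * (2 - D) by rewrite ler_wpM2r // ltW.
  move=> h3; lra.
pose s := (K * K)%N.
pose n := (s * K)%N.
exists n, (fun _ => K%:R^-1).
have n1 : (1 <= n)%N by rewrite /n /s !muln_gt0 K0.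
split => //; split.
  split.
    move=> i; rewrite invr_ge0 ltW //= invr_le1 ?unitfE ?gt_eqF //.
    by rewrite ler1n.
  exists s; rewrite sumr_const card_ord /n.
  have e : K%:R^-1 *+ (s * K) = K%:R^-1 * (s * K)%:R :> R by rewrite mulr_natr.
  by rewrite e (natrM _ s K) (mulrC (s%:R)) mulrA mulVf ?mul1r // gt_eqF.
move=> mu [mu0 mu1] [_ _ hJ] hdisc.
pose A (r : 'I_K) := [set i : 'I_n | (i %% K)%N == r].
have hS : forall S, mu S != 0 -> exists r : 'I_K, [disjoint A r & S].
  move=> S muS.
  have [|r h] := @residue_missing n K S D K2 hD.
    move=> i1 i2 hi; have := hdisc S muS i1 i2 hi.
    have le : (i1 <= i2.+1)%N by case/andP: hi => /leqW.
    have i2n : (i2.+1 <= n)%N by case/andP: hi.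
    rewrite card_inter_interval // sumr_const.
    have -> : #|Defs.interval n i1 i2| = (i2.+1 - i1)%N.
      by rewrite -(setTI (Defs.interval n i1 i2)) card_inter_interval // !pre_setT // (leq_trans le).
    by rewrite -(mulr_natr (K%:R^-1)) mulrC.
  exists r; rewrite disjoint_subset; apply/subsetP => i; rewrite !inE => /eqP e.
  by apply/negP => iS; move: (h i iS); rewrite e eqxx.
have le1 : 1 <= \sum_(r : 'I_K) Pr mu (fun S => [disjoint A r & S]).
  rewrite -mu1 /Pr (eq_bigr (fun r => \sum_(S : {set 'I_n}) (if [disjoint A r & S] then mu S else 0))); last first.
    by move=> r _; rewrite big_mkcond.
  rewrite exchange_big /=; apply: ler_sum => S _.
  case: (eqVneq (mu S) 0) => [->| nz]; first by apply: sumr_ge0 => r _; case: ifP.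
  case: (hS S nz) => r hr; rewrite (bigD1 r) //= hr lerDl; apply: sumr_ge0 => r' _.
  by case: ifP.
pose q := 1 - K%:R^-1 : R.
have q0 : 0 <= q by rewrite subr_ge0 invr_le1 ?unitfE ?gt_eqF // ler1n.
have q1 : q <= 1 by rewrite lerBlDr lerDl invr_ge0 ltW.
have cardA : forall r : 'I_K, (s <= #|A r|)%N.
  move=> r.
  have lt : forall j : 'I_s, (j * K + r < n)%N.
    by move=> j; rewrite /n; have := ltn_ord j; have := ltn_ord r; nia.
  pose f (j : 'I_s) : 'I_n := Ordinal (lt j).
  have finj : injective f.
    move=> j j' /(congr1 val) /= /eqP; rewrite eqn_add2r eqn_pmul2r // => /eqP e.
    exact: val_inj.
  rewrite -[X in (X <= _)%N](card_ord s) -cardsT -(card_imset _ finj).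
  apply: subset_leq_card; apply/subsetP => i /imsetP [j _ ->].
  by rewrite inE /= modnMDl modn_small.
have le2 : \sum_(r : 'I_K) Pr mu (fun S => [disjoint A r & S]) <= K%:R * q ^+ s.
  have -> : K%:R * q ^+ s = \sum_(r : 'I_K) q ^+ s by rewrite sumr_const card_ord mulr_natl.
  apply: ler_sum => r _; case: (hJ (A r)) => _ h; apply: le_trans h _.
  by rewrite prodr_const ler_wiXn2l.
have qs : K%:R * q ^+ s < 1.
  have -> : q = (K - 1)%:R / K%:R.
    by rewrite /q natrB ?mulrBl ?divff ?mul1r ?gt_eqF // ltnW.
  rewrite expr_div_n -!natrX mulrA -natrM ltr_pdivrMr ?mul1r ?ltr_nat ?ltr0n ?expn_gt0 ?K0 //.
  exact: K_bound.
have := le_trans le1 le2; lra.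
Qed.

End P2.

End Aux.

Theorem theorem1 (R : realType) :
  (forall (n : nat), (1 <= n)%N -> forall p : 'I_n -> R, valid_probs p ->
     exists mu : {set 'I_n} -> R,
       [/\ is_sample_distr mu, is_varopt mu p & interval_disc_le mu p 2]) /\
  (forall D : R, D < 2 ->
     exists (n : nat) (p : 'I_n -> R), (1 <= n)%N /\ valid_probs p /\
       forall mu : {set 'I_n} -> R,
         is_sample_distr mu -> is_varopt mu p -> ~ interval_disc_le mu p D).
Proof.
split.
  by move=> n n1 p hp; exact: (@Aux.part1 R n n1 p hp).
by move=> D hD; exact: (@Aux.part2 R D hD).
Qed.
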